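(* If $A\subseteq\mathbb{N}$ is quasicreative, then $\overline{A}=\mathbb{N}\setminus A$ contains an infinite recursively enumerable subset.
   Context: $\varphi_0,\varphi_1,\ldots$ is a standard acceptable enumeration of the partial computable functions $\mathbb{N}\to\mathbb{N}$ and $\mathcal{W}_e=\operatorname{dom}\varphi_e$. $\mathfrak{P}_{\mathrm{fin}}(\mathbb{N})$ is the set of finite subsets of $\mathbb{N}$; $f\colon\mathbb{N}\to\mathfrak{P}_{\mathrm{fin}}(\mathbb{N})$ is computable if $e\mapsto$ (canonical index of $f(e)$) is computable. A recursively enumerable $A$ is quasicreative if there is a computable $f\colon\mathbb{N}\to\mathfrak{P}_{\mathrm{fin}}(\mathbb{N})$ such that for all $e$, if $\mathcal{W}_e\subseteq\overline{A}$ then $f(e)\subseteq\overline{A}$ and there is $z\in f(e)$ with $z\in\overline{A}\setminus\mathcal{W}_e$. *)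

(* Defs.v *)
(* A concrete model of partial computable functions:
   unary partial recursive functions on nat (with Cantor pairing),
   given by syntax trees, a big-step semantics, and a Goedel numbering. *)
From Stdlib Require Import Arith.

Definition cpair (x y : nat) : nat := (x + y) * (x + y + 1) / 2 + y.

Inductive prog : Type :=
| PZero
| PSucc
| PId
| PFst
| PSnd
| PComp (f g : prog)
| PPair (f g : prog)
| PRec (f g : prog)
| PMu (f : prog).

Inductive eval : prog -> nat -> nat -> Prop :=
| ev_zero x : eval PZero x 0
| ev_succ x : eval PSucc x (S x)
| ev_id x : eval PId x x
| ev_fst a b : eval PFst (cpair a b) a
| ev_snd a b : eval PSnd (cpair a b) b
| ev_comp f g x y z : eval g x y -> eval f y z -> eval (PComp f g) x z
| ev_pair f g x y z : eval f x y -> eval g x z -> eval (PPair f g) x (cpair y z)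
| ev_rec0 f g x y : eval f x y -> eval (PRec f g) (cpair x 0) y
| ev_recS f g x n y z :
    eval (PRec f g) (cpair x n) y -> eval g (cpair x (cpair n y)) z ->
    eval (PRec f g) (cpair x (S n)) z
| ev_mu f x n :
    eval f (cpair x n) 0 ->
    (forall m, m < n -> exists k, eval f (cpair x m) (S k)) ->
    eval (PMu f) x n.

Fixpoint code (p : prog) : nat :=
  match p with
  | PZero => cpair 0 0
  | PSucc => cpair 1 0
  | PId => cpair 2 0
  | PFst => cpair 3 0
  | PSnd => cpair 4 0
  | PComp f g => cpair 5 (cpair (code f) (code g))
  | PPair f g => cpair 6 (cpair (code f) (code g))
  | PRec f g => cpair 7 (cpair (code f) (code g))
  | PMu f => cpair 8 (code f)
  end.

(* phi e x y : phi_e(x) is defined and equals y.  Numbers that are not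
   codes of programs index the empty function. *)
Definition phi (e x y : nat) : Prop := exists p, code p = e /\ eval p x y.

Definition W (e : nat) : nat -> Prop := fun x => exists y, phi e x y.

Definition re (A : nat -> Prop) : Prop := exists e, forall x, A x <-> W e x.

Definition computable (g : nat -> nat) : Prop :=
  exists e, forall x, phi e x (g x).

(* Canonical finite set with canonical index n: D_n = { z | bit z of n is 1 }. *)
Definition D (n : nat) : nat -> Prop := fun z => Nat.odd (n / 2 ^ z) = true.

(* f : N -> P_fin(N) is given by the computable map g of canonical indices,
   f(e) = D_(g e). *)
Definition quasicreative (A : nat -> Prop) : Prop :=
  re A /\
  exists g : nat -> nat, computable g /\
    forall e, (forall x, W e x -> ~ A x) ->
      (forall z, D (g e) z -> ~ A z) /\
      (exists z, D (g e) z /\ ~ A z /\ ~ W e z).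

Definition infinite_set (B : nat -> Prop) : Prop :=
  forall n, exists x, n <= x /\ B x.

(* Main.v *)
Require Import Defs.
From Stdlib Require Import Arith Lia List Classical.
Import ListNotations.


Fixpoint Tr (s : nat) : nat := match s with 0 => 0 | S s => Tr s + S s end.

Lemma Tr_eq s : s * (s + 1) / 2 = Tr s.
Proof.
  induction s as [|s IH]; [reflexivity|].
  cbn [Tr]. rewrite <- IH.
  replace (S s * (S s + 1)) with (s * (s + 1) + S s * 2) by lia.
  rewrite Nat.div_add by lia. reflexivity.
Qed.

Lemma cpair_Tr x y : cpair x y = Tr (x + y) + y.
Proof. unfold cpair. rewrite Tr_eq. reflexivity. Qed.

Lemma Tr_mono s s' : s <= s' -> Tr s <= Tr s'.
Proof. induction 1; cbn [Tr]; lia. Qed.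

Lemma cpair_inj x y x' y' : cpair x y = cpair x' y' -> x = x' /\ y = y'.
Proof.
  rewrite !cpair_Tr. intro H.
  assert (x + y = x' + y').
  { destruct (Nat.lt_total (x+y) (x'+y')) as [h|[h|h]]; auto.
    - pose proof (Tr_mono (S (x+y)) (x'+y') h). cbn [Tr] in *. lia.
    - pose proof (Tr_mono (S (x'+y')) (x+y) h). cbn [Tr] in *. lia. }
  rewrite H0 in H. lia.
Qed.

Lemma cpair00 : cpair 0 0 = 0.
Proof. reflexivity. Qed.

Lemma code_inj p q : code p = code q -> p = q.
Proof.
  revert q; induction p; destruct q; cbn [code]; intro H;
  apply cpair_inj in H; destruct H as [H1 H2]; try discriminate; auto;
  try (apply cpair_inj in H2; destruct H2 as [H2 H3]; f_equal; auto).
  f_equal; auto.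
Qed.

Lemma eval_det p : forall x y, eval p x y -> forall y', eval p x y' -> y = y'.
Proof.
  induction p; intros x y H y' H'.
  - inversion H; inversion H'; subst; auto.
  - inversion H; inversion H'; subst; auto.
  - inversion H; inversion H'; subst; auto.
  - inversion H; subst. inversion H'; subst.
    match goal with h : cpair _ _ = cpair _ _ |- _ => apply cpair_inj in h; destruct h; subst; auto end.
  - inversion H; subst. inversion H'; subst.
    match goal with h : cpair _ _ = cpair _ _ |- _ => apply cpair_inj in h; destruct h; subst; auto end.
  - inversion H; subst. inversion H'; subst.
    assert (y0 = y1) by (eapply IHp2; eauto). subst. eapply IHp1; eauto.
  - inversion H; subst. inversion H'; subst.
    f_equal; [eapply IHp1|eapply IHp2]; eauto.
  - remember (PRec p1 p2) as q. revert y' H'.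
    induction H; inversion Heqq; subst; intros y' H'.
    + inversion H'; subst;
      match goal with h : cpair _ _ = cpair _ _ |- _ => apply cpair_inj in h; destruct h as [? h]; subst end.
      * eapply IHp1; eauto.
      * discriminate.
    + inversion H'; subst;
      match goal with h : cpair _ _ = cpair _ _ |- _ => apply cpair_inj in h; destruct h as [? h]; subst end.
      * discriminate.
      * match goal with h : S _ = S _ |- _ => injection h as <- end.
        assert (y = y0) by (apply IHeval1; auto). subst.
        eapply IHp2; eauto.
  - inversion H as [| | | | | | | | | ? ? ? Ha Hb]; subst.
    inversion H' as [| | | | | | | | | ? ? ? Ha' Hb']; subst.
    destruct (Nat.lt_total y y') as [h|[h|h]]; auto.
    + destruct (Hb' _ h) as [k Hk].
      pose proof (IHp _ _ Ha _ Hk). discriminate.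
    + destruct (Hb _ h) as [k Hk].
      pose proof (IHp _ _ Ha' _ Hk). discriminate.
Qed.


Definition S2 := PComp PSnd PSnd.
Definition ADD := PRec PId (PComp PSucc S2).
Definition TRI := PComp (PRec PZero (PComp ADD (PPair S2 (PComp PSucc (PComp PFst PSnd))))) (PPair PZero PId).
Definition CPAIR := PComp ADD (PPair (PComp TRI ADD) PSnd).
Definition cp a b := PComp CPAIR (PPair a b).
Fixpoint const n := match n with 0 => PZero | S n => PComp PSucc (const n) end.
Definition NOTZ := PComp (PRec (const 1) (const 0)) (PPair PZero PId).
Definition notzf p := match p with 0 => 1 | _ => 0 end.

Ltac ev := repeat match goal with
 | |- eval (PComp _ _) _ _ => eapply ev_comp
 | |- eval (PPair _ _) _ _ => eapply ev_pair
 | |- eval S2 _ _ => eapply ev_comp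
 | |- eval PFst _ _ => apply ev_fst
 | |- eval PSnd _ _ => apply ev_snd
 | |- eval PId _ _ => apply ev_id
 | |- eval PSucc _ _ => apply ev_succ
 | |- eval PZero _ _ => apply ev_zero
 end.

Lemma L_add a b : eval ADD (cpair a b) (a + b).
Proof.
  induction b as [|b IH].
  - rewrite Nat.add_0_r. apply ev_rec0. constructor.
  - replace (a + S b) with (S (a + b)) by lia.
    eapply ev_recS; [exact IH|]. unfold S2. ev.
Qed.

Lemma L_tri s : eval TRI s (Tr s).
Proof.
  unfold TRI. eapply ev_comp; [ev|].
  induction s as [|s IH].
  - apply ev_rec0. constructor.
  - eapply ev_recS; [exact IH|]. cbn [Tr].
    eapply ev_comp; [|apply L_add]. unfold S2. ev.
Qed.

Lemma L_cpair a b : eval CPAIR (cpair a b) (cpair a b).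
Proof.
  unfold CPAIR. rewrite (cpair_Tr a b) at 2.
  eapply ev_comp; [|apply L_add]. eapply ev_pair; [|apply ev_snd].
  eapply ev_comp; [apply L_add|apply L_tri].
Qed.

Lemma L_cp a b x u v : eval a x u -> eval b x v -> eval (cp a b) x (cpair u v).
Proof. intros. unfold cp. eapply ev_comp; [|apply L_cpair]. constructor; auto. Qed.

Lemma L_const n x : eval (const n) x n.
Proof. induction n; cbn [const]; [constructor|]. eapply ev_comp; [exact IHn|constructor]. Qed.

Lemma L_notz p : eval NOTZ p (notzf p).
Proof.
  unfold NOTZ. eapply ev_comp; [ev|].
  induction p as [|p IH].
  - apply ev_rec0. apply L_const.
  - eapply ev_recS; [exact IH|apply L_const].
Qed.

Definition HO := PComp (PRec PZero (cp (PComp ADD (PPair (PComp PFst S2) (PComp PSnd S2))) (PComp NOTZ (PComp PSnd S2)))) (PPair PZero PId).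

Lemma half_uniq h p n : n = 2 * h + p -> p <= 1 -> h = Nat.div2 n /\ p = Nat.b2n (Nat.odd n).
Proof.
  intros. pose proof (Nat.div2_odd n).
  assert (Nat.b2n (Nat.odd n) <= 1) by (destruct (Nat.odd n); simpl; lia).
  lia.
Qed.

Lemma L_HO y : eval HO y (cpair (Nat.div2 y) (Nat.b2n (Nat.odd y))).
Proof.
  unfold HO. eapply ev_comp; [ev|].
  induction y as [|y IH].
  - apply ev_rec0. simpl. rewrite cpair00. constructor.
  - eapply ev_recS; [exact IH|].
    pose proof (Nat.div2_odd y) as E.
    assert (Hb : Nat.b2n (Nat.odd y) <= 1) by (destruct (Nat.odd y); simpl; lia).
    destruct (half_uniq (Nat.div2 y + Nat.b2n (Nat.odd y)) (notzf (Nat.b2n (Nat.odd y))) (S y)) as [E1 E2].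
    { destruct (Nat.odd y); simpl in *; lia. }
    { destruct (Nat.odd y); simpl; lia. }
    rewrite <- E1, <- E2.
    apply L_cp.
    + eapply ev_comp; [|apply L_add]. unfold S2; ev.
    + eapply ev_comp; [|apply L_notz]. unfold S2; ev.
Qed.

Definition SH := PRec PId (PComp PFst (PComp HO S2)).

Lemma L_SH d k : eval SH (cpair d k) (d / 2 ^ k).
Proof.
  induction k as [|k IH].
  - replace (d / 2 ^ 0) with d by (symmetry; apply Nat.div_1_r). apply ev_rec0. constructor.
  - eapply ev_recS; [exact IH|].
    eapply ev_comp; [eapply ev_comp; [unfold S2; ev|apply L_HO]|].
    replace (d / 2 ^ S k) with (Nat.div2 (d / 2 ^ k)).
    + apply ev_fst.
    + rewrite Nat.div2_div, Nat.Div0.div_div. f_equal. simpl. lia.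
Qed.

Definition NOTBIT := PComp NOTZ (PComp PSnd (PComp HO SH)).

Lemma L_NOTBIT d x : eval NOTBIT (cpair d x) (notzf (Nat.b2n (Nat.odd (d / 2 ^ x)))).
Proof.
  unfold NOTBIT. eapply ev_comp; [|apply L_notz].
  eapply ev_comp; [eapply ev_comp; [apply L_SH|apply L_HO]|apply ev_snd].
Qed.

Fixpoint lst (l : list nat) : nat := match l with [] => 0 | d :: l => cpair d (lst l) end.

Definition SI := PRec PId (PComp PSnd S2).

Lemma skipn_S_tl {A} k (l : list A) : skipn (S k) l = tl (skipn k l).
Proof. revert l; induction k; intros [|a l]; simpl; auto. apply (IHk l). Qed.

Lemma L_SI l k : eval SI (cpair (lst l) k) (lst (skipn k l)).
Proof.
  induction k as [|k IH].
  - apply ev_rec0. constructor.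
  - eapply ev_recS; [exact IH|].
    eapply ev_comp; [unfold S2; ev|]. rewrite (skipn_S_tl k l).
    destruct (skipn k l) as [|a l']; simpl.
    + rewrite <- cpair00 at 1. rewrite <- cpair00. apply ev_snd.
    + apply ev_snd.
Qed.

Definition NTH := PComp PFst SI.

Lemma L_NTH l k : eval NTH (cpair (lst l) k) (nth k l 0).
Proof.
  unfold NTH. eapply ev_comp; [apply L_SI|].
  revert l; induction k; intros [|a l]; simpl.
  - rewrite <- cpair00 at 1. apply ev_fst.
  - apply ev_fst.
  - rewrite <- cpair00 at 1. apply ev_fst.
  - apply IHk.
Qed.

Opaque cpair.

Lemma least_wit (f : nat -> bool) : (exists n, f n = true) ->
  exists n, f n = true /\ forall m, m < n -> f m = false.
Proof.
  intros [n Hn]. revert Hn. induction n as [n IH] using lt_wf_ind. intro Hn.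
  destruct (classic (exists m, m < n /\ f m = true)) as [[m [Hm1 Hm2]]|Hno].
  - exact (IH m Hm1 Hm2).
  - exists n. split; auto. intros m Hm. destruct (f m) eqn:E; auto.
    exfalso; apply Hno; eauto.
Qed.

Lemma W_mu (F : prog) (val : nat -> nat -> bool) :
  (forall x n, eval F (cpair x n) (notzf (Nat.b2n (val x n)))) ->
  forall x, W (code (PMu F)) x <-> exists n, val x n = true.
Proof.
  intros HF x. split.
  - intros [y [p [Hc He]]]. apply code_inj in Hc. subst p.
    inversion He as [| | | | | | | | | ? ? ? Ha Hb]; subst.
    exists y. pose proof (eval_det _ _ _ Ha _ (HF x y)) as E.
    destruct (val x y); simpl in E; auto; discriminate.
  - intro H. destruct (least_wit (val x) H) as [n [Hn Hm]].
    exists n, (PMu F). split; auto. apply ev_mu.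
    + pose proof (HF x n) as E. rewrite Hn in E. exact E.
    + intros m Hlt. exists 0. pose proof (HF x m) as E. rewrite (Hm m Hlt) in E. exact E.
Qed.

Definition Pfix c := PMu (PComp NOTBIT (PPair (PComp NTH (PPair (const c) PSnd)) PFst)).

Lemma W_Pfix l x : W (code (Pfix (lst l))) x <-> exists k, Nat.odd (nth k l 0 / 2 ^ x) = true.
Proof.
  apply (W_mu _ (fun x k => Nat.odd (nth k l 0 / 2 ^ x))).
  intros y n. eapply ev_comp; [|apply L_NOTBIT].
  apply ev_pair; [|apply ev_fst].
  eapply ev_comp; [|apply L_NTH]. apply ev_pair; [apply L_const|apply ev_snd].
Qed.

Definition CC := PComp (PRec PZero (cp (const 5) (cp (const 1) S2))) (PPair PZero PId).

Lemma L_CC c : eval CC c (code (const c)).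
Proof.
  unfold CC. eapply ev_comp; [ev|].
  induction c as [|c IH].
  - apply ev_rec0. change (code (const 0)) with (cpair 0 0). rewrite cpair00. constructor.
  - eapply ev_recS; [exact IH|].
    change (code (const (S c))) with (cpair 5 (cpair 1 (code (const c)))).
    apply L_cp; [apply L_const|]. apply L_cp; [apply L_const|]. unfold S2; ev.
Qed.

Fixpoint codeprog p := match p with
 | PZero => cp (const 0) (const 0)
 | PSucc => cp (const 1) (const 0)
 | PId => cp (const 2) (const 0)
 | PFst => cp (const 3) (const 0)
 | PSnd => cp (const 4) (const 0)
 | PComp f g => cp (const 5) (cp (codeprog f) (codeprog g))
 | PPair f g => cp (const 6) (cp (codeprog f) (codeprog g))
 | PRec f g => cp (const 7) (cp (codeprog f) (codeprog g))
 | PMu f => cp (const 8) (codeprog f)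
 end.

Lemma L_codeprog p x : eval (codeprog p) x (code p).
Proof.
  induction p; cbn [codeprog code]; repeat apply L_cp; auto using L_const.
Qed.

Definition CP := cp (const 8) (cp (const 5) (cp (codeprog NOTBIT) (cp (const 6)
  (cp (cp (const 5) (cp (codeprog NTH) (cp (const 6) (cp CC (codeprog PSnd)))))
      (codeprog PFst))))).

Lemma code_Pfix c : code (Pfix c) = (cpair 8 (cpair 5 (cpair (code NOTBIT) (cpair 6
    (cpair (cpair 5 (cpair (code NTH) (cpair 6 (cpair (code (const c)) (code PSnd)))))
      (code PFst)))))).
Proof. unfold Pfix. cbn [code]. reflexivity. Qed.

Lemma L_CP c : eval CP c (code (Pfix c)).
Proof.
  rewrite code_Pfix.
  unfold CP.
  apply L_cp; [apply L_const|].
  apply L_cp; [apply L_const|].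
  apply L_cp; [apply L_codeprog|].
  apply L_cp; [apply L_const|].
  apply L_cp; [|apply L_codeprog].
  apply L_cp; [apply L_const|].
  apply L_cp; [apply L_codeprog|].
  apply L_cp; [apply L_const|].
  apply L_cp; [apply L_CC|apply L_codeprog].
Qed.

Section Seq.
Variable g : nat -> nat.
Variable pg : prog.
Hypothesis Hpg : forall x, eval pg x (g x).

Fixpoint Lf n := match n with 0 => [] | S n => g (code (Pfix (lst (Lf n)))) :: Lf n end.

Definition SEQ := PComp (PRec PZero (cp (PComp pg (PComp CP S2)) S2)) (PPair PZero PId).

Lemma L_SEQ n : eval SEQ n (lst (Lf n)).
Proof.
  unfold SEQ. eapply ev_comp; [ev|].
  induction n as [|n IH].
  - apply ev_rec0. constructor.
  - eapply ev_recS; [exact IH|]. cbn [Lf lst].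
    apply L_cp.
    + eapply ev_comp; [|apply Hpg]. eapply ev_comp; [|apply L_CP]. unfold S2; ev.
    + unfold S2; ev.
Qed.

Definition PB := PMu (PComp NOTBIT (PPair (PComp pg (PComp CP (PComp SEQ PSnd))) PFst)).

Lemma W_PB x : W (code PB) x <-> exists n, Nat.odd (g (code (Pfix (lst (Lf n)))) / 2 ^ x) = true.
Proof.
  unfold PB. revert x. apply (W_mu _ (fun x n => Nat.odd (g (code (Pfix (lst (Lf n)))) / 2 ^ x))).
  intros y n. eapply ev_comp; [|apply L_NOTBIT].
  apply ev_pair; [|apply ev_fst].
  eapply ev_comp; [|apply Hpg]. eapply ev_comp; [|apply L_CP].
  eapply ev_comp; [apply ev_snd|apply L_SEQ].
Qed.

Lemma nth_Lf n k : k < n -> nth k (Lf n) 0 = g (code (Pfix (lst (Lf (n - S k))))).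
Proof.
  revert k; induction n; intros k Hk; [lia|].
  destruct k; cbn [Lf nth].
  - replace (S n - 1) with n by lia. reflexivity.
  - rewrite IHn by lia. reflexivity.
Qed.

Lemma nth_Lf_out n k : n <= k -> nth k (Lf n) 0 = 0.
Proof.
  revert k; induction n; intros k Hk; [destruct k; reflexivity|].
  destruct k; [lia|]. cbn [Lf nth]. apply IHn. lia.
Qed.

End Seq.

Opaque cpair.

Theorem mainTheorem5 (A : nat -> Prop) :
  quasicreative A ->
  exists B : nat -> Prop,
    re B /\ (forall x, B x -> ~ A x) /\ infinite_set B.
Proof.
  intros [_ [g [[eg Heg] Hq]]].
  destruct (Heg 0) as [p0 [Hc0 _]].
  assert (Hpg : forall x, eval p0 x (g x)).
  { intro x. destruct (Heg x) as [p [Hc He]]. rewrite <- Hc0 in Hc.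
    apply code_inj in Hc. subst p. exact He. }
  set (E := fun n => code (Pfix (lst (Lf g n)))).
  assert (WE : forall n x, W (E n) x <-> exists j, j < n /\ D (g (E j)) x).
  { intros n x. unfold E. rewrite W_Pfix. split.
    - intros [k Hk]. destruct (Nat.lt_ge_cases k n) as [h|h].
      + exists (n - S k). split; [lia|]. rewrite (nth_Lf g n k h) in Hk. exact Hk.
      + rewrite (nth_Lf_out g n k h) in Hk. rewrite Nat.Div0.div_0_l in Hk. discriminate.
    - intros [j [Hj Hd]]. exists (n - S j).
      rewrite (nth_Lf g n (n - S j)) by lia.
      replace (n - S (n - S j)) with j by lia. exact Hd. }
  assert (C1 : forall n x, W (E n) x -> ~ A x).
  { intro n. induction n as [n IH] using lt_wf_ind. intros x Hx.
    apply WE in Hx. destruct Hx as [j [Hj Hd]].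
    exact (proj1 (Hq (E j) (IH j Hj)) x Hd). }
  assert (C2 : forall n, exists l, length l = n /\ NoDup l /\
                 forall y, In y l -> exists j, j < n /\ D (g (E j)) y).
  { induction n as [|n [l [Hl1 [Hl2 Hl3]]]].
    - exists []. split; [reflexivity|]. split; [constructor|]. intros y [].
    - destruct (proj2 (Hq (E n) (C1 n))) as [z [Hz1 [_ Hz3]]].
      exists (z :: l). split; [simpl; lia|]. split.
      + constructor; [|exact Hl2]. intro Hin. apply Hz3. apply WE. exact (Hl3 z Hin).
      + intros y [<-|Hy].
        * exists n. split; [lia|exact Hz1].
        * destruct (Hl3 y Hy) as [j [Hj Hd]]. exists j. split; [lia|exact Hd]. }
  exists (W (code (PB p0))). split; [|split].
  - exists (code (PB p0)). intro x. reflexivity.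
  - intros x Hx. apply (W_PB g p0 Hpg) in Hx. destruct Hx as [n Hn].
    exact (proj1 (Hq (E n) (C1 n)) x Hn).
  - intro m. apply NNPP. intro Hno.
    destruct (C2 (S m)) as [l [Hl1 [Hl2 Hl3]]].
    assert (Hinc : incl l (seq 0 m)).
    { intros y Hy. apply in_seq. destruct (Hl3 y Hy) as [j [_ Hd]].
      destruct (Nat.lt_ge_cases y m) as [h|h]; [lia|].
      exfalso. apply Hno. exists y. split; [exact h|].
      apply (W_PB g p0 Hpg). exists j. exact Hd. }
    pose proof (NoDup_incl_length Hl2 Hinc) as Hlen.
    rewrite length_seq in Hlen. lia.
Qed.
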